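(* Let $\mathbb X=\langle\omega_1,\rho\rangle$ and $\mathbb Y=\langle\omega_1,\sigma\rangle$, where $\rho$ is the equivalence relation with classes $2=\{0,1\}$, $\omega\setminus2$, and $\{\alpha\}$ for $\omega\le\alpha<\omega_1$; and $\sigma$ is the equivalence relation with classes $\{n\}$ for $n\in\omega$ and $\omega_1\setminus\omega$. Then $\mathbb X\equiv_{\mathcal P_{\infty\omega}}\mathbb Y$, $\mathbb X\not\equiv\mathbb Y$, and $\mathbb X\not\sim_c\mathbb Y$.
   Context: The language has one binary relation symbol $R$. A condensation from $\langle X,\rho\rangle$ onto $\langle Y,\sigma\rangle$ is a bijection $F:X\to Y$ with $x\,\rho\,x'\Rightarrow F(x)\,\sigma\,F(x')$; $\mathbb X\sim_c\mathbb Y$ means condensations exist in both directions. $\equiv$ is first order elementary equivalence. $\mathcal P_0$ consists of all atomic formulas ($v_\alpha=v_\beta$, $R(v_\alpha,v_\beta)$) and all $\neg\,v_\alpha=v_\beta$; $\mathcal P_{\infty\omega}$ is the closure of $\mathcal P_0$ under $\forall v$, $\exists v$ and conjunctions and disjunctions of arbitrary sets of formulas (no negation); $\equiv_{\mathcal P_{\infty\omega}}$ means satisfying the same $\mathcal P_{\infty\omega}$-sentences. *)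

(* Defs.v *)
From Stdlib Require Import Arith PeanoNat.

Record structure : Type := Str { carrier : Type; rel : carrier -> carrier -> Prop }.

Definition upd {A : Type} (env : nat -> A) (i : nat) (a : A) : nat -> A :=
  fun j => if Nat.eqb j i then a else env j.

Inductive fo : Type :=
| FEq  : nat -> nat -> fo
| FR   : nat -> nat -> fo
| FNot : fo -> fo
| FAnd : fo -> fo -> fo
| FOr  : fo -> fo -> fo
| FAll : nat -> fo -> fo
| FEx  : nat -> fo -> fo.

Fixpoint fo_free (k : nat) (p : fo) : Prop :=
  match p with
  | FEq i j | FR i j => k = i \/ k = j
  | FNot q => fo_free k q
  | FAnd q r | FOr q r => fo_free k q \/ fo_free k r
  | FAll i q | FEx i q => k <> i /\ fo_free k q
  end.

Definition fo_sentence (p : fo) : Prop := forall k, ~ fo_free k p.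

Fixpoint fo_sat (M : structure) (env : nat -> carrier M) (p : fo) : Prop :=
  match p with
  | FEq i j => env i = env j
  | FR i j => rel M (env i) (env j)
  | FNot q => ~ fo_sat M env q
  | FAnd q r => fo_sat M env q /\ fo_sat M env r
  | FOr q r => fo_sat M env q \/ fo_sat M env r
  | FAll i q => forall a, fo_sat M (upd env i a) q
  | FEx i q => exists a, fo_sat M (upd env i a) q
  end.

Definition fo_models (M : structure) (p : fo) : Prop :=
  forall env : nat -> carrier M, fo_sat M env p.

Definition elem_equiv (M N : structure) : Prop :=
  forall p, fo_sentence p -> (fo_models M p <-> fo_models N p).

Inductive pinf : Type :=
| PEq  : nat -> nat -> pinf
| PNeq : nat -> nat -> pinf
| PR   : nat -> nat -> pinf
| PAll : nat -> pinf -> pinf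
| PEx  : nat -> pinf -> pinf
| PAnd : forall I : Type, (I -> pinf) -> pinf
| POr  : forall I : Type, (I -> pinf) -> pinf.

Fixpoint p_free (k : nat) (p : pinf) : Prop :=
  match p with
  | PEq i j | PNeq i j | PR i j => k = i \/ k = j
  | PAll i q | PEx i q => k <> i /\ p_free k q
  | PAnd J f | POr J f => exists x : J, p_free k (f x)
  end.

Definition p_sentence (p : pinf) : Prop := forall k, ~ p_free k p.

Fixpoint p_sat (M : structure) (env : nat -> carrier M) (p : pinf) : Prop :=
  match p with
  | PEq i j => env i = env j
  | PNeq i j => env i <> env j
  | PR i j => rel M (env i) (env j)
  | PAll i q => forall a, p_sat M (upd env i a) q
  | PEx i q => exists a, p_sat M (upd env i a) q
  | PAnd J f => forall x : J, p_sat M env (f x)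
  | POr J f => exists x : J, p_sat M env (f x)
  end.

Definition p_models (M : structure) (p : pinf) : Prop :=
  forall env : nat -> carrier M, p_sat M env p.

Definition pinf_equiv (M N : structure) : Prop :=
  forall p, p_sentence p -> (p_models M p <-> p_models N p).

Definition bijective_map {A B : Type} (F : A -> B) : Prop :=
  (forall x y, F x = F y -> x = y) /\ (forall b, exists a, F a = b).

Definition condensation (M N : structure) (F : carrier M -> carrier N) : Prop :=
  bijective_map F /\ forall x x', rel M x x' -> rel N (F x) (F x').

Definition cond_equiv (M N : structure) : Prop :=
  (exists F, condensation M N F) /\ (exists G, condensation N M G).

(** [is_omega1 W lt]: (W, lt) is a strict well-order that is uncountable while
    every proper initial segment is countable, i.e. (W,lt) is order-isomorphic
    to omega_1. *)
Definition countable_type (A : Type) : Prop :=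
  exists f : A -> nat, forall x y, f x = f y -> x = y.

Definition is_omega1 (W : Type) (lt : W -> W -> Prop) : Prop :=
  (forall x, ~ lt x x) /\
  (forall x y z, lt x y -> lt y z -> lt x z) /\
  (forall x y, lt x y \/ x = y \/ lt y x) /\
  well_founded lt /\
  ~ countable_type W /\
  (forall a, countable_type {x : W | lt x a}).

(** [e] identifies omega with the initial segment omega of W: e is strictly
    increasing and its range is downward closed; so e n is the n-th element. *)
Definition omega_embedding (W : Type) (lt : W -> W -> Prop) (e : nat -> W) : Prop :=
  (forall n, lt (e n) (e (S n))) /\
  (forall w n, lt w (e n) -> exists m, w = e m).

Definition in_omega {W : Type} (e : nat -> W) (x : W) : Prop := exists n, x = e n.

Definition rhoX {W : Type} (e : nat -> W) (x y : W) : Prop :=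
  (exists m n, m < 2 /\ n < 2 /\ x = e m /\ y = e n) \/
  (exists m n, 2 <= m /\ 2 <= n /\ x = e m /\ y = e n) \/
  (~ in_omega e x /\ x = y).

Definition sigmaY {W : Type} (e : nat -> W) (x y : W) : Prop :=
  (in_omega e x /\ x = y) \/ (~ in_omega e x /\ ~ in_omega e y).

(* Main.v *)
Require Import Defs.
From Stdlib Require Import Arith PeanoNat Lia List Classical ClassicalEpsilon.
Import ListNotations.

Lemma transfer (M N : structure)
  (G : list nat -> (nat -> carrier M) -> (nat -> carrier N) -> Prop)
  (Hat : forall L f g i j, G L f g -> In i L -> In j L ->
     (f i = f j <-> g i = g j) /\ (rel M (f i) (f j) -> rel N (g i) (g j)))
  (Hforth : forall L f g i a, G L f g -> exists b, G (i::L) (upd f i a) (upd g i b))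
  (Hback : forall L f g i b, G L f g -> exists a, G (i::L) (upd f i a) (upd g i b)) :
  forall p L f g, (forall k, p_free k p -> In k L) -> G L f g -> p_sat M f p -> p_sat N g p.
Proof.
  induction p as [i j|i j|i j|i q IH|i q IH|I h IH|I h IH]; intros L f g HL HG Hs; simpl in *.
  - destruct (Hat L f g i j HG (HL i (or_introl eq_refl)) (HL j (or_intror eq_refl))) as [H1 _].
    apply H1; auto.
  - destruct (Hat L f g i j HG (HL i (or_introl eq_refl)) (HL j (or_intror eq_refl))) as [H1 _].
    intro E; apply Hs; apply H1; auto.
  - destruct (Hat L f g i j HG (HL i (or_introl eq_refl)) (HL j (or_intror eq_refl))) as [_ H2].
    auto.
  - intros b. destruct (Hback L f g i b HG) as [a Ha].
    apply (IH (i::L) (upd f i a) (upd g i b)); [|exact Ha|apply Hs].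
    intros k Hk. destruct (Nat.eq_dec k i) as [->|Hne]; [left; reflexivity|right; apply HL; split; auto].
  - destruct Hs as [a Ha]. destruct (Hforth L f g i a HG) as [b Hb]. exists b.
    apply (IH (i::L) (upd f i a) (upd g i b)); [|exact Hb|exact Ha].
    intros k Hk. destruct (Nat.eq_dec k i) as [->|Hne]; [left; reflexivity|right; apply HL; split; auto].
  - intros x. apply (IH x L f g); auto. intros k Hk; apply HL; exists x; auto.
  - destruct Hs as [x Hx]. exists x. apply (IH x L f g); auto. intros k Hk; apply HL; exists x; auto.
Qed.

Lemma transfer_models (M N : structure)
  (G : list nat -> (nat -> carrier M) -> (nat -> carrier N) -> Prop)
  (Hat : forall L f g i j, G L f g -> In i L -> In j L ->
     (f i = f j <-> g i = g j) /\ (rel M (f i) (f j) -> rel N (g i) (g j)))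
  (Hforth : forall L f g i a, G L f g -> exists b, G (i::L) (upd f i a) (upd g i b))
  (Hback : forall L f g i b, G L f g -> exists a, G (i::L) (upd f i a) (upd g i b))
  (H0 : forall f g, G [] f g) (m0 : carrier M) :
  forall p, p_sentence p -> p_models M p -> p_models N p.
Proof.
  intros p Hp HM g. apply (transfer M N G Hat Hforth Hback p [] (fun _ => m0) g).
  - intros k Hk; exfalso; apply (Hp k Hk).
  - apply H0.
  - apply HM.
Qed.

Definition Good {W : Type} (U : W -> W -> Prop) (L : list nat) (f g : nat -> W) : Prop :=
  (forall k k', In k L -> In k' L -> (f k = f k' <-> g k = g k')) /\
  (forall k, In k L -> U (f k) (g k)).

Lemma good_nil {W : Type} (U : W -> W -> Prop) f g : Good U [] f g.
Proof. split; intros; contradiction. Qed.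

Lemma good_ext {W : Type} (U : W -> W -> Prop) L f g i a b :
  Good U L f g -> U a b -> (forall k, In k L -> k <> i -> (a = f k <-> b = g k)) ->
  Good U (i::L) (upd f i a) (upd g i b).
Proof.
  intros [H1 H2] Hu Hab. unfold upd. split.
  - intros k k' Hk Hk'.
    destruct (Nat.eqb_spec k i) as [->|n1]; destruct (Nat.eqb_spec k' i) as [->|n2].
    + tauto.
    + destruct Hk' as [->|Hk']; [congruence|]. apply Hab; auto.
    + destruct Hk as [->|Hk]; [congruence|]. specialize (Hab k Hk n1). split; intro E; symmetry; apply Hab; auto.
    + destruct Hk as [->|Hk]; [congruence|]. destruct Hk' as [->|Hk']; [congruence|]. auto.
  - intros k Hk. destruct (Nat.eqb_spec k i) as [->|n1]; auto.
    destruct Hk as [->|Hk]; [congruence|]. auto.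
Qed.

Lemma good_forth {W : Type} (U : W -> W -> Prop) L f g i a :
  Good U L f g -> (forall l, exists b, U a b /\ ~ In b l) ->
  exists b, Good U (i::L) (upd f i a) (upd g i b).
Proof.
  intros HG Hfr. destruct (classic (exists k, In k L /\ k <> i /\ f k = a)) as [[k [Hk [Hki Hfk]]]|Hn].
  - exists (g k). apply good_ext; auto.
    + subst a. apply (proj2 HG); auto.
    + intros k' Hk' _. subst a. apply (proj1 HG); auto.
  - destruct (Hfr (map g L)) as [b [Hu Hb]]. exists b. apply good_ext; auto.
    intros k Hk Hki. split; intro E.
    + exfalso; apply Hn; exists k; auto.
    + exfalso; apply Hb; subst b; apply in_map; auto.
Qed.

Lemma good_back {W : Type} (U : W -> W -> Prop) L f g i b :
  Good U L f g -> (forall l, exists a, U a b /\ ~ In a l) ->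
  exists a, Good U (i::L) (upd f i a) (upd g i b).
Proof.
  intros HG Hfr. destruct (classic (exists k, In k L /\ k <> i /\ g k = b)) as [[k [Hk [Hki Hfk]]]|Hn].
  - exists (f k). apply good_ext; auto.
    + subst b. apply (proj2 HG); auto.
    + intros k' Hk' _. subst b. apply (proj1 HG); auto.
  - destruct (Hfr (map f L)) as [a [Hu Ha]]. exists a. apply good_ext; auto.
    intros k Hk Hki. split; intro E.
    + exfalso; apply Ha; subst a; apply in_map; auto.
    + exfalso; apply Hn; exists k; auto.
Qed.

Lemma countable_of_code (W : Type) (Code : W -> nat -> Prop) :
  (forall x, exists n, Code x n) -> (forall x y n, Code x n -> Code y n -> x = y) ->
  countable_type W.
Proof.
  intros Hex Hu. exists (fun x => proj1_sig (constructive_indefinite_description _ (Hex x))).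
  intros x y E.
  destruct (constructive_indefinite_description _ (Hex x)) as [n Hn].
  destruct (constructive_indefinite_description _ (Hex y)) as [m Hm]. simpl in E. subst m.
  eauto.
Qed.
Lemma e_mono (W : Type) (lt : W -> W -> Prop) (e : nat -> W)
  (HW : is_omega1 W lt) (He : omega_embedding W lt e) :
  forall m n, m < n -> lt (e m) (e n).
Proof.
  destruct HW as [Hirr [Htr _]]. destruct He as [Hs _].
  intros m n Hmn. induction Hmn.
  - apply Hs.
  - eapply Htr; eauto.
Qed.

Lemma e_inj (W : Type) (lt : W -> W -> Prop) (e : nat -> W)
  (HW : is_omega1 W lt) (He : omega_embedding W lt e) :
  forall m n, e m = e n -> m = n.
Proof.
  intros m n E. pose proof (e_mono W lt e HW He) as Hm.
  destruct HW as [Hirr _].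
  destruct (Nat.lt_trichotomy m n) as [H|[H|H]]; auto; exfalso.
  - specialize (Hm _ _ H). rewrite E in Hm. eapply Hirr; eauto.
  - specialize (Hm _ _ H). rewrite E in Hm. eapply Hirr; eauto.
Qed.

Lemma fresh_omega_bound (W : Type) (lt : W -> W -> Prop) (e : nat -> W)
  (HW : is_omega1 W lt) (He : omega_embedding W lt e) :
  forall l : list W, exists N, forall m, N <= m -> ~ In (e m) l.
Proof.
  induction l as [|x l [N HN]].
  - exists 0; intros m _ H; exact H.
  - destruct (classic (exists n, x = e n)) as [[n ->]|Hn].
    + exists (max N (S n)). intros m Hm [H|H].
      * apply (e_inj W lt e HW He) in H. lia.
      * apply (HN m); auto; lia.
    + exists N. intros m Hm [H|H].
      * apply Hn; exists m; auto.
      * apply (HN m); auto.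
Qed.

Lemma fresh_omega (W : Type) (lt : W -> W -> Prop) (e : nat -> W)
  (HW : is_omega1 W lt) (He : omega_embedding W lt e) :
  forall l : list W, exists m, 2 <= m /\ ~ In (e m) l.
Proof.
  intros l. destruct (fresh_omega_bound W lt e HW He l) as [N HN].
  exists (max N 2). split; [lia|]. apply HN; lia.
Qed.

Lemma fresh_nonomega (W : Type) (lt : W -> W -> Prop) (e : nat -> W)
  (HW : is_omega1 W lt) :
  forall l : list W, exists z, ~ in_omega e z /\ ~ In z l.
Proof.
  intros l. apply NNPP; intro Hn.
  destruct HW as [_ [_ [_ [_ [Hnc _]]]]]. apply Hnc.
  apply (countable_of_code W (fun x n =>
     (exists k, n = 2*k /\ x = e k) \/ (exists k, n = 2*k+1 /\ nth_error l k = Some x))).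
  - intros x. destruct (classic (in_omega e x)) as [[k Hk]|Ho].
    + exists (2*k). left; exists k; auto.
    + assert (Hin : In x l) by (apply NNPP; intro H; apply Hn; exists x; auto).
      apply In_nth_error in Hin. destruct Hin as [k Hk].
      exists (2*k+1). right; exists k; auto.
  - intros x y n [[k [-> Hx]]|[k [-> Hx]]] [[k' [E Hy]]|[k' [E Hy]]]; try lia.
    + assert (k = k') by lia; subst; auto.
    + assert (k = k') by lia; subst. congruence.
Qed.

Lemma rho_refl (W : Type) (e : nat -> W) x : rhoX e x x.
Proof.
  unfold rhoX. destruct (classic (in_omega e x)) as [[n ->]|Ho].
  - destruct (Nat.lt_ge_cases n 2).
    + left; exists n, n; auto.
    + right; left; exists n, n; auto.
  - right; right; auto.
Qed.

Lemma sigma_refl (W : Type) (e : nat -> W) x : sigmaY e x x.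
Proof.
  unfold sigmaY. destruct (classic (in_omega e x)); auto.
Qed.

Definition U1 {W : Type} (e : nat -> W) (a b : W) : Prop :=
  ~ in_omega e a -> exists m, 2 <= m /\ b = e m.
Definition U2 {W : Type} (e : nat -> W) (a b : W) : Prop :=
  in_omega e a -> ~ in_omega e b.

Lemma YtoX (W : Type) (lt : W -> W -> Prop) (e : nat -> W)
  (HW : is_omega1 W lt) (He : omega_embedding W lt e) :
  forall p, p_sentence p -> p_models (Str W (sigmaY e)) p -> p_models (Str W (rhoX e)) p.
Proof.
  apply (transfer_models (Str W (sigmaY e)) (Str W (rhoX e)) (Good (U1 e))); simpl.
  - intros L f g i j [H1 H2] Hi Hj. split; [apply H1; auto|].
    intros [[_ E]|[Ni Nj]].
    + assert (g i = g j) by (apply H1; auto). rewrite H. apply rho_refl.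
    + destruct (H2 i Hi Ni) as [m [Hm ->]]. destruct (H2 j Hj Nj) as [n [Hn ->]].
      right; left; exists m, n; auto.
  - intros L f g i a HG. apply good_forth; auto.
    intros l. destruct (fresh_omega W lt e HW He l) as [m [Hm Hl]].
    exists (e m); split; auto. intros _; exists m; auto.
  - intros L f g i b HG. apply good_back; auto.
    intros l. destruct (classic (exists m, 2 <= m /\ b = e m)) as [Hb|Hb].
    + destruct (fresh_nonomega W lt e HW l) as [z [Hz Hl]]. exists z; split; auto.
      intros _; auto.
    + destruct (fresh_omega W lt e HW He l) as [m [Hm Hl]]. exists (e m); split; auto.
      intros H; exfalso; apply H; exists m; auto.
  - intros; apply good_nil.
  - exact (e 0).
Qed.

Lemma XtoY (W : Type) (lt : W -> W -> Prop) (e : nat -> W)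
  (HW : is_omega1 W lt) (He : omega_embedding W lt e) :
  forall p, p_sentence p -> p_models (Str W (rhoX e)) p -> p_models (Str W (sigmaY e)) p.
Proof.
  apply (transfer_models (Str W (rhoX e)) (Str W (sigmaY e)) (Good (U2 e))); simpl.
  - intros L f g i j [H1 H2] Hi Hj. split; [apply H1; auto|].
    intros [[m [n [_ [_ [Ei Ej]]]]]|[[m [n [_ [_ [Ei Ej]]]]]|[_ E]]].
    + right. split; [apply (H2 i Hi)|apply (H2 j Hj)]; [exists m|exists n]; auto.
    + right. split; [apply (H2 i Hi)|apply (H2 j Hj)]; [exists m|exists n]; auto.
    + assert (g i = g j) by (apply H1; auto). rewrite H. apply sigma_refl.
  - intros L f g i a HG. apply good_forth; auto.
    intros l. destruct (fresh_nonomega W lt e HW l) as [z [Hz Hl]].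
    exists z; split; auto. intros _; auto.
  - intros L f g i b HG. apply good_back; auto.
    intros l. destruct (fresh_nonomega W lt e HW l) as [z [Hz Hl]].
    exists z; split; auto. intros H; contradiction.
  - intros; apply good_nil.
  - exact (e 0).
Qed.

Definition phi2 : fo :=
  FEx 0 (FEx 1 (FAnd (FNot (FEq 0 1)) (FAnd (FR 0 1)
    (FAll 2 (FOr (FNot (FR 0 2)) (FOr (FEq 2 0) (FEq 2 1))))))).

Lemma phi2_sentence : fo_sentence phi2.
Proof. intros k H. simpl in H. intuition lia. Qed.

Lemma not_elem (W : Type) (lt : W -> W -> Prop) (e : nat -> W)
  (HW : is_omega1 W lt) (He : omega_embedding W lt e) :
  ~ elem_equiv (Str W (rhoX e)) (Str W (sigmaY e)).
Proof.
  intros Heq. assert (HX : fo_models (Str W (rhoX e)) phi2).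
  { intros env. simpl. unfold upd; simpl. exists (e 0), (e 1). split; [|split].
    - intro E. apply (e_inj W lt e HW He) in E. discriminate.
    - left; exists 0, 1; auto.
    - intros a. destruct (classic (rhoX e (e 0) a)) as [Hr|Hr]; [right|left; auto].
      destruct Hr as [[m [n [Hm [Hn [E ->]]]]]|[[m [n [Hm [Hn [E ->]]]]]|[Ho _]]].
      + destruct n as [|[|n]]; [left|right|lia]; auto.
      + apply (e_inj W lt e HW He) in E. lia.
      + exfalso; apply Ho; exists 0; auto. }
  apply (proj1 (Heq phi2 phi2_sentence)) in HX.
  specialize (HX (fun _ => e 0)). simpl in HX. unfold upd in HX; simpl in HX.
  destruct HX as [x [y [Hne [Hs Hall]]]].
  destruct Hs as [[_ E]|[Nx Ny]]; [contradiction|].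
  destruct (fresh_nonomega W lt e HW [x; y]) as [z [Nz Hz]].
  destruct (Hall z) as [H|[H|H]].
  - apply H; right; auto.
  - apply Hz; left; auto.
  - apply Hz; right; left; auto.
Qed.

Lemma not_cond (W : Type) (lt : W -> W -> Prop) (e : nat -> W)
  (HW : is_omega1 W lt) (He : omega_embedding W lt e) :
  ~ cond_equiv (Str W (rhoX e)) (Str W (sigmaY e)).
Proof.
  intros [_ [G [[Ginj _] Grel]]]. simpl in G, Ginj, Grel.
  destruct (fresh_nonomega W lt e HW []) as [b0 [Nb0 _]].
  pose proof HW as HW'. destruct HW' as [_ [_ [_ [_ [Hnc _]]]]]. apply Hnc.
  apply (countable_of_code W (fun x n =>
     (exists k, n = 2*k /\ x = e k) \/ (n = 1 /\ G x = G b0) \/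
     (exists k, n = 2*k+3 /\ ~ in_omega e x /\ G x = e k))).
  - intros x. destruct (classic (in_omega e x)) as [[k Hk]|Ho].
    + exists (2*k). left; exists k; auto.
    + assert (Hr : rhoX e (G x) (G b0)) by (apply Grel; right; auto).
      destruct Hr as [[m [n [_ [_ [E _]]]]]|[[m [n [_ [_ [E _]]]]]|[_ E]]].
      * exists (2*m+3). right; right; exists m; auto.
      * exists (2*m+3). right; right; exists m; auto.
      * exists 1. right; left; auto.
  - intros x y n [[k [-> Hx]]|[[-> Hx]|[k [-> [_ Hx]]]]]
                 [[k' [E Hy]]|[[E Hy]|[k' [E [_ Hy]]]]]; try lia.
    + assert (k = k') by lia; subst; auto.
    + apply Ginj; congruence.
    + assert (k = k') by lia; subst. apply Ginj; congruence.
Qed.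

Theorem mainTheorem17 (W : Type) (lt : W -> W -> Prop) (e : nat -> W)
  (HW : is_omega1 W lt) (He : omega_embedding W lt e) :
  pinf_equiv (Str W (rhoX e)) (Str W (sigmaY e)) /\
  ~ elem_equiv (Str W (rhoX e)) (Str W (sigmaY e)) /\
  ~ cond_equiv (Str W (rhoX e)) (Str W (sigmaY e)).
Proof.
  split; [|split].
  - intros p Hp; split; [apply (XtoY W lt e)|apply (YtoX W lt e)]; auto.
  - exact (not_elem W lt e HW He).
  - exact (not_cond W lt e HW He).
Qed.
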